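(* Fix $a\in\mathbb{C}\setminus\{0\}$ and let $U\subset\mathbb{C}\setminus\{0\}$ be a domain on which $1-ax\neq 0$ (and on which the functions below are nowhere vanishing). Define \[ f_1(x)=\frac{ax}{1-ax},\qquad f_2(x)=\frac{1}{1-ax},\qquad x\in U. \] Then $\mathcal{A}[f_1]=f_2$ and $\mathcal{A}[f_2]=f_1$ on $U$, and $f_1\not\equiv f_2$; that is, $(f_1,f_2)$ is a nondegenerate period-$2$ orbit of $\mathcal{A}$.
   Context: For a complex-differentiable, nowhere-vanishing function $f$ on a domain $U\subset\mathbb{C}\setminus\{0\}$, the dual logarithmic derivative operator is $\mathcal{A}[f](x)=\dfrac{\mathrm{d}\ln f(x)}{\mathrm{d}\ln x}=\dfrac{x f'(x)}{f(x)}$ (for any fixed analytic branches of the logarithms). A pair $(f_1,f_2)$ of holomorphic nowhere-vanishing functions on $U$ is a period-$2$ orbit of $\mathcal{A}$ if $\mathcal{A}[f_1]=f_2$ and $\mathcal{A}[f_2]=f_1$; it is nondegenerate if $f_1\not\equiv f_2$. *)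

(* Defs.v *)
From mathcomp Require Import all_boot all_order all_algebra.
From mathcomp Require Import all_classical all_reals all_analysis.
From mathcomp Require Import complex.
Import GRing.Theory Num.Theory numFieldNormedType.Exports.
Set Implicit Arguments. Unset Strict Implicit. Unset Printing Implicit Defensive.
Local Open Scope ring_scope.
Local Open Scope classical_set_scope.

(* The complex plane as a (complete) normed space over itself. *)
Notation Cplx R := ((R[i])^o).

Definition is_domain (R : realType) (U : set (Cplx R)) : Prop :=
  open U /\ connected U /\ U !=set0.

Definition holomorphic_on (R : realType) (U : set (Cplx R)) (f : Cplx R -> Cplx R) : Prop :=
  forall x, U x -> derivable f x 1.

Definition nowhere_vanishing_on (R : realType) (U : set (Cplx R)) (f : Cplx R -> Cplx R) : Prop :=
  forall x, U x -> f x != 0.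

Definition dual_log_deriv (R : realType) (f : Cplx R -> Cplx R) (x : Cplx R) : Cplx R :=
  x * derive1 f x / f x.

Definition period2_orbit (R : realType) (U : set (Cplx R)) (f1 f2 : Cplx R -> Cplx R) : Prop :=
  [/\ holomorphic_on U f1 /\ holomorphic_on U f2,
      nowhere_vanishing_on U f1 /\ nowhere_vanishing_on U f2,
      (forall x, U x -> dual_log_deriv f1 x = f2 x) &
      (forall x, U x -> dual_log_deriv f2 x = f1 x)].

Definition nondegenerate_on (R : realType) (U : set (Cplx R)) (f1 f2 : Cplx R -> Cplx R) : Prop :=
  ~ (forall x, U x -> f1 x = f2 x).

(* Main.v *)
Require Import Defs.
From mathcomp Require Import all_boot all_order all_algebra.
From mathcomp Require Import all_classical all_reals all_analysis.
From mathcomp Require Import complex.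
Import GRing.Theory Num.Theory numFieldNormedType.Exports.
Local Open Scope ring_scope.
Local Open Scope classical_set_scope.

From mathcomp Require Import ring.
Lemma alg1 (F : fieldType) (a x : F) : 1 - a * x != 0 ->
  (a * x) * (a / (1 - a * x) ^+ 2) + (1 - a * x)^-1 * a = a / (1 - a * x) ^+ 2.
Proof. move=> nz. by field. Qed.
Section S.
Variables (R : realType) (a : Cplx R).

Lemma dg (x : Cplx R) : is_derive x 1 (fun y : Cplx R => 1 - a * y) (- a).
Proof.
have -> : (fun y : Cplx R => 1 - a * y) = cst 1 - (a \*: id) by apply/funext => y.
apply: is_derive_eq; rewrite sub0r; congr (- _).
exact: (mulr1 a).
Qed.



Lemma df2 (x : Cplx R) : 1 - a * x != 0 ->
  is_derive x 1 (fun y : Cplx R => 1 / (1 - a * y)) (a / (1 - a * x) ^+ 2).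
Proof.
move=> nz.
have -> : (fun y : Cplx R => 1 / (1 - a * y)) = (fun y => (1 - a * y)^-1)
  by apply/funext => y; rewrite mul1r.
have d := dg x.
have dd : derivable (fun y : Cplx R => 1 - a * y) x 1 by exact: ex_derive.
apply: DeriveDef.
  exact: (@derivableV _ (Cplx R) (fun y : Cplx R => 1 - a * y) x 1 nz dd).
rewrite (@deriveV _ (Cplx R) (fun y : Cplx R => 1 - a * y) x 1 nz dd).
rewrite derive_val.
rewrite scaleNr scalerN opprK.
exact: (mulrC ((1 - a * x) ^- 2) a).
Qed.

Lemma dh (x : Cplx R) : is_derive x 1 (fun y : Cplx R => a * y) a.
Proof.
have -> : (fun y : Cplx R => a * y) = (a \*: id) by apply/funext => y.
apply: is_derive_eq. exact: (mulr1 a).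
Qed.

Lemma df1 (x : Cplx R) : 1 - a * x != 0 ->
  is_derive x 1 (fun y : Cplx R => a * y / (1 - a * y)) (a / (1 - a * x) ^+ 2).
Proof.
move=> nz.
have e : (fun y : Cplx R => 1 / (1 - a * y)) = (fun y => (1 - a * y)^-1)
  by apply/funext => y; rewrite mul1r.
have d2 := df2 x nz. rewrite e in d2.
have d1 := dh x.
have hm := @is_deriveM _ (Cplx R) _ _ x 1 _ _ d1 d2.
apply: (is_derive_eq hm).
exact: (@alg1 R[i] a x nz).
Qed.
End S.

Lemma alg2 (F : fieldType) (a x : F) : a != 0 -> x != 0 -> 1 - a * x != 0 ->
  x * (a / (1 - a * x) ^+ 2) / (a * x / (1 - a * x)) = 1 / (1 - a * x).
Proof. move=> a0 x0 h. by field; rewrite h x0 a0. Qed.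

Lemma alg3 (F : fieldType) (a x : F) : 1 - a * x != 0 ->
  x * (a / (1 - a * x) ^+ 2) / (1 / (1 - a * x)) = a * x / (1 - a * x).
Proof. move=> h. by field; rewrite h oner_eq0. Qed.

Theorem proposition3p1 (R : realType) (a : Cplx R) (U : set (Cplx R)) :
  a != 0 ->
  is_domain U ->
  ~ U 0 ->
  (forall x, U x -> 1 - a * x != 0) ->
  nowhere_vanishing_on U (fun x => a * x / (1 - a * x)) ->
  nowhere_vanishing_on U (fun x => 1 / (1 - a * x)) ->
  period2_orbit U (fun x => a * x / (1 - a * x)) (fun x => 1 / (1 - a * x)) /\
  nondegenerate_on U (fun x => a * x / (1 - a * x)) (fun x => 1 / (1 - a * x)).
Proof.
move=> a0 [_ [_ [x0 Ux0]]] nU0 nz nv1 nv2.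
split; last first.
  move=> /(_ x0 Ux0) eq.
  have h := nz x0 Ux0.
  have : a * x0 / (1 - a * x0) * (1 - a * x0) = 1 / (1 - a * x0) * (1 - a * x0)
    by rewrite eq.
  rewrite !divfK // => e'.
  by move: h; rewrite e' subrr eqxx.
split.
- split=> x Ux.
    have d := @df1 R a x (nz x Ux); exact: ex_derive.
  have d := @df2 R a x (nz x Ux); exact: ex_derive.
- by split.
- move=> x Ux; have d := @df1 R a x (nz x Ux).
  rewrite /dual_log_deriv derive1E derive_val.
  have x0n : x != 0 by apply/eqP => xe; apply: nU0; rewrite -xe.
  exact: (@alg2 R[i] a x a0 x0n (nz x Ux)).
- move=> x Ux; have d := @df2 R a x (nz x Ux).
  rewrite /dual_log_deriv derive1E derive_val.
  exact: (@alg3 R[i] a x (nz x Ux)).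
Qed.
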